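(* Let $\mathcal M$ be a class of metric families which is stable under inclusion, and let $\mathcal X$ be a metric family. The following are equivalent. \begin{itemize} \item[(i)] $\operatorname{asdim}_{\mathcal M}(\mathcal X)\leq n$; \item[(ii)] for every $R$, there is a cover $\mathcal U$ of $\mathcal X$ with $R$-multiplicity at most $n+1$, where every element of $\mathcal U$ is $2R$-connected and $\mathcal U \in \mathcal M.$ \end{itemize} Similarly, the following are equivalent: \begin{itemize} \item[(iii)] $\overline{\operatorname{asdim}}_{\mathcal M}(\mathcal X)\leq n$; \item[(iv)] for every $R$, there is a cover $\mathcal U$ of $\mathcal X$ with $R$-multiplicity at most $n+1$, where every element of $\mathcal U$ is $2R$-connected and for every $s>0$ and $m\geq 0$, $\{N^m_s(U)\mid U\in \mathcal U\} \in \mathcal M.$ \end{itemize}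
   Context: Metric families are collections of $1$-uniformly discrete bounded geometry metric spaces; $\mathcal M$ is stable under inclusion if subfamilies of families in $\mathcal M$ are in $\mathcal M$. $\operatorname{asdim}_{\mathcal M}(\mathcal X)\le n$ means for every $r$ there is $\mathcal Z\in\mathcal M$ with each $X\in\mathcal X$ written $X_0\cup\dots\cup X_n$, each $X_i$ a disjoint union of sets in $\mathcal Z$ pairwise at distance $\ge r$; $\overline{\operatorname{asdim}}_{\mathcal M}$ requires in addition $N^m_s(\mathcal Z)\in\mathcal M$ for all $m,s$, where $N^0_s(U)=U$ and $N^{k+1}_s(U)$ is the union of all members of the cover meeting the closed $s$-neighbourhood of $N^k_s(U)$. A cover has $R$-multiplicity at most $k$ if every closed $R$-ball in each $X$ meets at most $k$ of its sets; $U$ is $R$-connected if any two points are joined by a chain in $U$ with steps at most $R$. *)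

(* Defs.v *)
From Stdlib Require Import Reals List.
Open Scope R_scope.

(** A metric space, modelled set-theoretically: a set of points [pts] inside
    an ambient carrier type, together with a distance function.  Subspaces
    keep the same carrier and distance and shrink [pts], so a subspace of a
    subspace is literally a subspace (as in set theory). *)
Record space : Type := Space {
  car : Type;
  pts : car -> Prop;
  dist : car -> car -> R
}.

Definition sub (X : space) (U : car X -> Prop) : space :=
  Space (car X) U (dist X).

Definition mfamily := space -> Prop.

Definition is_metric (X : space) : Prop :=
  (forall x y, pts X x -> pts X y -> 0 <= dist X x y) /\
  (forall x y, pts X x -> pts X y -> (dist X x y = 0 <-> x = y)) /\
  (forall x y, pts X x -> pts X y -> dist X x y = dist X y x) /\
  (forall x y z, pts X x -> pts X y -> pts X z ->
     dist X x z <= dist X x y + dist X y z).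

Definition unif_discrete1 (X : space) : Prop :=
  forall x y, pts X x -> pts X y -> x <> y -> 1 <= dist X x y.

Definition bounded_geometry (X : space) : Prop :=
  forall r : R, exists N : nat, forall x, pts X x ->
    exists l : list (car X), (length l <= N)%nat /\
      forall y, pts X y -> dist X x y <= r -> In y l.

Definition metric_family (F : mfamily) : Prop :=
  forall X, F X -> is_metric X /\ unif_discrete1 X /\ bounded_geometry X.

Definition subfamily (G F : mfamily) : Prop :=
  forall Y, G Y -> exists Z (U : car Z -> Prop),
    F Z /\ (forall x, U x -> pts Z x) /\ Y = sub Z U.

Definition stable_under_inclusion (M : mfamily -> Prop) : Prop :=
  forall F G, M F -> subfamily G F -> M G.

Definition cover := forall X : space, (car X -> Prop) -> Prop.

Definition is_cover (F : mfamily) (C : cover) : Prop :=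
  forall X, F X ->
    (forall U, C X U -> forall x, U x -> pts X x) /\
    (forall x, pts X x -> exists U, C X U /\ U x).

Definition cover_family (F : mfamily) (C : cover) : mfamily :=
  fun Y => exists X U, F X /\ C X U /\ Y = sub X U.

Definition cball (X : space) (x : car X) (r : R) : car X -> Prop :=
  fun y => pts X y /\ dist X x y <= r.

Definition multiplicity_le (F : mfamily) (C : cover) (r : R) (k : nat) : Prop :=
  forall X, F X -> forall x, pts X x ->
    exists l : list (car X -> Prop), (length l <= k)%nat /\
      forall U, C X U -> (exists y, U y /\ cball X x r y) -> In U l.

Inductive chain (X : space) (U : car X -> Prop) (r : R) : car X -> car X -> Prop :=
| chain_refl x : U x -> chain X U r x x
| chain_step x y z : U x -> dist X x y <= r -> chain X U r y z -> chain X U r x z.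

Definition r_connected (X : space) (U : car X -> Prop) (r : R) : Prop :=
  forall x y, U x -> U y -> chain X U r x y.

Definition cnbhd (X : space) (A : car X -> Prop) (s : R) : car X -> Prop :=
  fun y => pts X y /\ exists a, A a /\ dist X a y <= s.

Fixpoint Nms (X : space) (C : (car X -> Prop) -> Prop) (s : R) (m : nat)
  (U : car X -> Prop) : car X -> Prop :=
  match m with
  | O => U
  | S k => fun y => exists V, C V /\ (exists z, V z /\ cnbhd X (Nms X C s k U) s z) /\ V y
  end.

Definition N_family (F : mfamily) (C : cover) (m : nat) (s : R) : mfamily :=
  fun Y => exists X U, F X /\ C X U /\ Y = sub X (Nms X (C X) s m U).

(** X = X_0 u ... u X_n, each X_i the disjoint union of the r-separated
    pieces D i (i <= n). *)
Definition r_decomposition (X : space) (n : nat) (r : R)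
  (D : nat -> (car X -> Prop) -> Prop) : Prop :=
  (forall i V, (i <= n)%nat -> D i V -> forall x, V x -> pts X x) /\
  (forall x, pts X x -> exists i V, (i <= n)%nat /\ D i V /\ V x) /\
  (forall i V W, (i <= n)%nat -> D i V -> D i W -> V <> W ->
     forall x y, V x -> W y -> r <= dist X x y).

Definition asdim_M_le (M : mfamily -> Prop) (F : mfamily) (n : nat) : Prop :=
  forall r : R, 0 < r -> exists Z : mfamily, M Z /\
    forall X, F X -> exists D : nat -> (car X -> Prop) -> Prop,
      r_decomposition X n r D /\
      (forall i V, (i <= n)%nat -> D i V -> Z (sub X V)).

Definition asdim_bar_M_le (M : mfamily -> Prop) (F : mfamily) (n : nat) : Prop :=
  forall r : R, 0 < r -> exists D : forall X : space, nat -> (car X -> Prop) -> Prop,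
    (forall X, F X -> r_decomposition X n r (D X)) /\
    let C : cover := fun X V => exists i, (i <= n)%nat /\ D X i V in
    M (cover_family F C) /\
    (forall (m : nat) (s : R), 0 < s -> M (N_family F C m s)).

(* Main.v *)
Require Import Defs.
From Stdlib Require Import Reals List.
From Stdlib Require Import Lra Lia Classical ClassicalEpsilon FunctionalExtensionality PropExtensionality.
Require Import Defs.
Open Scope R_scope.

Lemma chain_head {X U s a b} : chain X U s a b -> U a.
Proof. intros H; destruct H; auto. Qed.

Lemma chain_last {X U s a b} : chain X U s a b -> U b.
Proof. intros H; induction H; auto. Qed.

Lemma chain_trans {X U s a b c} : chain X U s a b -> chain X U s b c -> chain X U s a c.
Proof. intros H; induction H; intros H'; auto. eapply chain_step; eauto. Qed.

Lemma chain_sym {X U s a b} : (forall x y, U x -> U y -> dist X x y = dist X y x) ->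
  chain X U s a b -> chain X U s b a.
Proof.
  intros Hs H; induction H as [x Ux|x y z Ux Dxy Cyz IH].
  - now apply chain_refl.
  - apply (chain_trans IH).
    pose proof (chain_head Cyz) as Uy.
    apply chain_step with x; auto.
    + rewrite Hs; auto.
    + now apply chain_refl.
Qed.

Definition comp (X:space) (V: car X -> Prop) (s:R) (o: car X) : car X -> Prop :=
  fun y => chain X V s o y.

Lemma chain_lift {X V s} o a b : chain X V s a b -> chain X V s o a ->
  chain X (comp X V s o) s a b.
Proof.
  intros H; induction H as [x Ux|x y z Ux Dxy Cyz IH]; intros Hoa.
  - apply chain_refl; exact Hoa.
  - apply chain_step with y; auto.
    apply IH. apply (chain_trans Hoa).
    apply chain_step with y; auto. apply chain_refl. exact (chain_head Cyz).
Qed.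

Lemma Nms_mono X (C1 C2 : (car X -> Prop) -> Prop) s :
  (forall W, C1 W -> exists V, C2 V /\ forall y, W y -> V y) ->
  forall m (A B : car X -> Prop), (forall y, A y -> B y) ->
  forall y, Nms X C1 s m A y -> Nms X C2 s m B y.
Proof.
  intros HC m; induction m as [|m IH]; intros A B HAB y Hy; simpl in *.
  - auto.
  - unfold cnbhd in *.
    destruct Hy as [V [HV [[z [Vz [Pz [a [Ha Hd]]]]] Vy]]].
    destruct (HC V HV) as [V' [HV' Hsub]].
    exists V'. split; [exact HV'|]. split; [|auto].
    exists z. split; [auto|]. split; [exact Pz|]. exists a. split; [eapply IH; eauto|exact Hd].
Qed.

Lemma filter_nodup (T : Type) (P : T -> Prop) (l : list T) :
  exists l', NoDup l' /\ forall a, In a l' <-> (In a l /\ P a).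
Proof.
  induction l as [|a l IH].
  - exists nil. split; [constructor|]. simpl; tauto.
  - destruct IH as [l' [Hn Hi]].
    destruct (classic (P a /\ ~ In a l')) as [Ha|Ha].
    + exists (a :: l'). split; [constructor; tauto|].
      intros b; simpl; rewrite Hi. split.
      * intros [<-|H]; tauto.
      * intros [[<-|H] HP]; [left; reflexivity| right; tauto].
    + exists l'. split; auto. intros b; simpl. split.
      * intros Hb. apply Hi in Hb. tauto.
      * intros [[<-|H] HP].
        -- destruct (classic (In a l')) as [Hb|Hb]; auto. exfalso; apply Ha; auto.
        -- apply Hi; auto.
Qed.

Definition chS (X : space) (S : (car X -> Prop) -> Prop) : car X -> Prop :=
  epsilon (inhabits (fun _ : car X => False)) S.

Lemma decomp (X : space) (r : R) (Hr : 0 < r) (k : nat) :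
  forall (Y : car X -> Prop) (C : (car X -> Prop) -> Prop) (Rr : R),
  (forall x, Y x -> dist X x x = 0) ->
  (forall x y, Y x -> Y y -> dist X x y = dist X y x) ->
  (forall x y z, Y x -> Y y -> Y z -> dist X x z <= dist X x y + dist X y z) ->
  r * 4 ^ k <= Rr ->
  (forall x, Y x -> exists U, C U /\ U x) ->
  (forall x, Y x -> exists l : list (car X -> Prop), (length l <= k)%nat /\
      forall U, C U -> (exists y, Y y /\ U y /\ dist X x y <= Rr) -> In U l) ->
  exists D : nat -> (car X -> Prop) -> Prop,
    (forall i V, D i V -> (i < k)%nat) /\
    (forall i V, D i V -> forall x, V x -> Y x) /\
    (forall x, Y x -> exists i V, D i V /\ V x) /\
    (forall i V W, D i V -> D i W -> V <> W -> forall x y, V x -> W y -> r <= dist X x y) /\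
    (forall i V, D i V -> exists U, C U /\ forall x, V x -> U x).
Proof.
  induction k as [|k IH]; intros Y C Rr H0 Hs Ht HR Hc Hm.
  - exists (fun _ _ => False). split; [tauto|split; [tauto|split; [|split; tauto]]].
    intros x Yx; exfalso; destruct (Hc x Yx) as [U [CU Ux]]; destruct (Hm x Yx) as [l [Hl Hin]].
    destruct l; [|simpl in Hl; lia]. apply (Hin U CU). exists x; split; auto; split; auto.
    rewrite H0; auto; simpl in HR; lra.
  - pose (g := r * 4 ^ k).
    assert (Hg1 : r <= g). { unfold g. assert (1 <= 4 ^ k) by (apply pow_R1_Rle; lra). nra. }
    assert (HR' : 4 * g <= Rr). { unfold g. simpl in HR. lra. }
    pose (rho := 2 * g).
    assert (Hrho : rho = 2 * g) by reflexivity.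
    clearbody rho.
    pose (A := fun (t : R) (x : car X) => fun U : car X -> Prop =>
                 C U /\ exists y, Y y /\ U y /\ dist X x y <= t).
    pose (full := fun x => exists l, NoDup l /\ length l = S k /\ forall U, In U l -> A rho x U).
    pose (Z := fun x => Y x /\ full x /\ chS X (A rho x) x).
    pose (Y' := fun x => Y x /\ ~ Z x).
    assert (F1 : forall y z d, Y y -> Y z -> full y -> full z -> dist X y z <= d ->
                   rho + d <= Rr -> A rho y = A rho z).
    { intros y z d Yy Yz [ly [Nly [Lly Ily]]] [lz [Nlz [Llz Ilz]]] Hyz Hd.
      destruct (Hm y Yy) as [l [Hl Hin]].
      assert (Hy : forall U, A rho y U -> In U l).
      { intros U [CU [w [Yw [Uw Dw]]]]. apply Hin; auto. exists w. repeat split; auto. lra. }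
      assert (Hz : forall U, A rho z U -> In U l).
      { intros U [CU [w [Yw [Uw Dw]]]]. apply Hin; auto. exists w. repeat split; auto.
        pose proof (Ht y z w Yy Yz Yw). lra. }
      assert (Iy : incl l ly). { apply NoDup_length_incl; auto. lia. intros U HU. apply Hy, Ily, HU. }
      assert (Iz : incl l lz). { apply NoDup_length_incl; auto. lia. intros U HU. apply Hz, Ilz, HU. }
      apply functional_extensionality; intro U; apply propositional_extensionality; split; intro HU.
      - apply Ilz, Iz, Hy, HU.
      - apply Ily, Iy, Hz, HU. }
    assert (Ch : forall x, full x -> A rho x (chS X (A rho x))).
    { intros x [l [_ [Ll Il]]]. unfold chS. apply epsilon_spec.
      destruct l as [|U l]; [simpl in Ll; discriminate|]. exists U. apply Il; simpl; auto. }
    assert (Hm' : forall x, Y' x -> exists l : list (car X -> Prop), (length l <= k)%nat /\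
               forall U, C U -> (exists y, Y' y /\ U y /\ dist X x y <= g) -> In U l).
    { intros x [Yx nZx].
      destruct (Hm x Yx) as [l [Hl Hin]].
      destruct (filter_nodup _ (fun U => C U /\ exists y, Y' y /\ U y /\ dist X x y <= g) l)
        as [l' [Nl' Il']].
      assert (Inc : incl l' l) by (intros U HU; apply Il', HU).
      pose proof (NoDup_incl_length Nl' Inc) as Len.
      destruct (Nat.le_gt_cases (length l') k) as [Hle|Hgt].
      - exists l'. split; auto. intros U CU Hex. apply Il'. split; auto.
        apply Hin; auto. destruct Hex as [y [[Yy _] [Uy Dy]]]. exists y. repeat split; auto. lra.
      - exfalso.
        assert (Fx : full x).
        { exists l'. split; auto. split; [lia|]. intros U HU. apply Il' in HU.
          destruct HU as [_ [CU [y [[Yy _] [Uy Dy]]]]]. split; auto. exists y. repeat split; auto. lra. }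
        assert (Il : incl l l'). { apply NoDup_length_incl; auto; lia. }
        pose proof (Ch x Fx) as Cx.
        assert (HB : In (chS X (A rho x)) l').
        { apply Il. destruct Cx as [CU [w [Yw [Uw Dw]]]]. apply Hin; auto.
          exists w. repeat split; auto. lra. }
        apply Il' in HB. destruct HB as [_ [_ [y [[Yy nZy] [Uy Dy]]]]].
        apply nZy.
        assert (Fy : full y).
        { exists l'. split; auto. split; [lia|]. intros U HU. apply Il' in HU.
          destruct HU as [_ [CU [z [[Yz _] [Uz Dz]]]]]. split; auto. exists z. repeat split; auto.
          pose proof (Ht y x z Yy Yx Yz) as T. rewrite (Hs y x Yy Yx) in T. lra. }
        assert (E : A rho y = A rho x). { apply (F1 y x g); auto. rewrite Hs; auto. lra. }
        split; auto. split; auto. rewrite E. exact Uy. }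
    destruct (IH Y' C g) as [D0 [D1 [D2 [D3 [D4 D5]]]]].
    + intros x [Yx _]; auto.
    + intros x y [Yx _] [Yy _]; auto.
    + intros x y z [Yx _] [Yy _] [Yz _]; auto.
    + unfold g; lra.
    + intros x [Yx _]; auto.
    + exact Hm'.
    + exists (fun i V => D0 i V \/ (i = k /\ exists x, Z x /\ V = (fun y => Z y /\ A rho y = A rho x))).
      split; [|split; [|split; [|split]]].
      * intros i V [H|[-> _]]; [apply D1 in H; lia| lia].
      * intros i V [H|[_ [x0 [_ ->]]]] x Hx.
        -- destruct (D2 _ _ H _ Hx) as [Yx _]; exact Yx.
        -- destruct Hx as [[Yx _] _]; exact Yx.
      * intros x Yx. destruct (classic (Z x)) as [Zx|nZx].
        -- exists k, (fun y => Z y /\ A rho y = A rho x). split.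
           ++ right; split; auto; exists x; auto.
           ++ split; auto.
        -- destruct (D3 x (conj Yx nZx)) as [i [V [HV Vx]]]. exists i, V. auto.
      * intros i V W [HV|[-> [x0 [Zx0 ->]]]] [HW|[Hi [x1 [Zx1 ->]]]] Hne x y Vx Wy.
        -- exact (D4 _ _ _ HV HW Hne _ _ Vx Wy).
        -- apply D1 in HV; lia.
        -- apply D1 in HW; lia.
        -- apply Rnot_lt_le; intro Hlt.
           apply Hne. destruct Vx as [Zx Ex]. destruct Wy as [Zy Ey].
           assert (E : A rho x = A rho y).
           { destruct Zx as [Yx [Fx _]]. destruct Zy as [Yy [Fy _]].
             apply (F1 x y r); auto; lra. }
           assert (E2 : A rho x0 = A rho x1) by congruence.
           rewrite E2. reflexivity.
      * intros i V [HV|[_ [x0 [Zx0 ->]]]]; [apply (D5 _ _ HV)|].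
        exists (chS X (A rho x0)). split; [apply (Ch x0 (proj1 (proj2 Zx0)))|].
        intros y [Zy Ey]. destruct Zy as [_ [_ Hy]]. rewrite Ey in Hy. exact Hy.
Qed.

Definition CCof (X : space) (n : nat) (Rr : R) (D : nat -> (car X -> Prop) -> Prop) :
  (car X -> Prop) -> Prop :=
  fun W => exists i V x, (i <= n)%nat /\ D i V /\ V x /\ W = comp X V (2 * Rr) x.

Lemma comp_cover (X : space) (n : nat) (Rr : R) (D : nat -> (car X -> Prop) -> Prop) :
  is_metric X -> 0 < Rr -> r_decomposition X n (2 * Rr + 1) D ->
  (forall W, CCof X n Rr D W -> forall x, W x -> pts X x) /\
  (forall x, pts X x -> exists W, CCof X n Rr D W /\ W x) /\
  (forall x, pts X x -> exists l : list (car X -> Prop), (length l <= S n)%nat /\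
      forall U, CCof X n Rr D U -> (exists y, U y /\ cball X x Rr y) -> In U l) /\
  (forall W, CCof X n Rr D W -> r_connected X W (2 * Rr)) /\
  (forall W, CCof X n Rr D W -> exists i V, (i <= n)%nat /\ D i V /\ forall y, W y -> V y).
Proof.
  intros [Hnn [Hz [Hs Ht]]] HR [D1 [D2 D3]].
  assert (P5 : forall W, CCof X n Rr D W -> exists i V, (i <= n)%nat /\ D i V /\ forall y, W y -> V y).
  { intros W [i [V [x [Hi [DV [Vx ->]]]]]]. exists i, V. split; auto. split; auto.
    intros y Hy. exact (chain_last Hy). }
  assert (Vs : forall i V, (i <= n)%nat -> D i V -> forall a b, V a -> V b -> dist X a b = dist X b a).
  { intros i V Hi DV a b Va Vb. apply Hs; eapply D1; eauto. }
  split; [|split; [|split; [|split]]].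
  - intros W HW x Wx. destruct (P5 W HW) as [i [V [Hi [DV Hsub]]]]. eapply D1; eauto.
  - intros x Px. destruct (D2 x Px) as [i [V [Hi [DV Vx]]]].
    exists (comp X V (2 * Rr) x). split.
    + exists i, V, x. auto.
    + apply chain_refl; exact Vx.
  - intros x Px.
    pose (P := fun i W => exists V x', D i V /\ V x' /\ W = comp X V (2*Rr) x' /\
                          exists y, W y /\ cball X x Rr y).
    pose (Wsel := fun i => epsilon (inhabits (fun _ : car X => False)) (P i)).
    exists (map Wsel (seq 0 (S n))). split; [rewrite length_map, length_seq; lia|].
    intros U [i [V [x0 [Hi [DV [Vx0 ->]]]]]] [y [Uy By]].
    assert (Sp : P i (Wsel i)).
    { unfold Wsel. apply epsilon_spec. exists (comp X V (2*Rr) x0), V, x0. repeat split; auto.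
      exists y; auto. }
    destruct Sp as [V' [x1 [DV' [Vx1 [Eq [y' [Wy' By']]]]]]].
    apply in_map_iff. exists i. split; [|apply in_seq; lia].
    rewrite Eq. rewrite Eq in Wy'.
    destruct By as [Py Dy]; destruct By' as [Py' Dy'].
    assert (Dyy : dist X y' y <= 2 * Rr).
    { pose proof (Ht y' x y Py' Px Py) as T. rewrite (Hs y' x Py' Px) in T. lra. }
    assert (VV : V = V').
    { apply NNPP; intro Hne.
      pose proof (D3 i V V' Hi DV DV' Hne y y' (chain_last Uy) (chain_last Wy')) as Hd.
      rewrite (Hs y y') in Hd; try (eapply D1; eauto; exact (chain_last _)).
      lra. eapply D1; [exact Hi|exact DV|exact (chain_last Uy)].
      eapply D1; [exact Hi|exact DV'|exact (chain_last Wy')]. }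
    subst V'.
    assert (C10 : chain X V (2 * Rr) x1 x0).
    { apply (chain_trans Wy'). apply chain_step with y.
      - exact (chain_last Wy').
      - exact Dyy.
      - apply (chain_sym (Vs i V Hi DV)). exact Uy. }
    assert (C01 : chain X V (2 * Rr) x0 x1) by exact (chain_sym (Vs i V Hi DV) C10).
    apply functional_extensionality; intro z; apply propositional_extensionality; split; intro Hz'.
    + exact (chain_trans C01 Hz').
    + exact (chain_trans C10 Hz').
  - intros W HW. destruct HW as [i [V [x0 [Hi [DV [Vx0 ->]]]]]].
    intros a b Wa Wb. apply (chain_lift x0).
    + apply (chain_trans (chain_sym (Vs i V Hi DV) Wa)). exact Wb.
    + exact Wa.
  - exact P5.
Qed.

Lemma decomp_X (X : space) (n : nat) (r : R) (C : (car X -> Prop) -> Prop) :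
  is_metric X -> 0 < r ->
  (forall x, pts X x -> exists U, C U /\ U x) ->
  (forall x, pts X x -> exists l : list (car X -> Prop), (length l <= S n)%nat /\
      forall U, C U -> (exists y, U y /\ cball X x (r * 4 ^ S n) y) -> In U l) ->
  exists D, r_decomposition X n r D /\ (forall i V, D i V -> exists U, C U /\ forall x, V x -> U x).
Proof.
  intros [Hnn [Hz [Hs Ht]]] Hr Hc Hmul.
  destruct (decomp X r Hr (S n) (pts X) C (r * 4 ^ S n)) as [D [D1 [D2 [D3 [D4 D5]]]]].
  - intros x Px; apply (proj2 (Hz x x Px Px)); reflexivity.
  - exact Hs.
  - exact Ht.
  - lra.
  - exact Hc.
  - intros x Px. destruct (Hmul x Px) as [l [Hl Hin]]. exists l; split; auto.
    intros U CU [y [Py [Uy Dy]]]. apply Hin; auto. exists y; split; auto; split; auto.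
  - exists D. split; [|exact D5].
    split; [|split].
    + intros i V _ DV x Vx. eapply D2; eauto.
    + intros x Px. destruct (D3 x Px) as [i [V [DV Vx]]]. exists i, V.
      apply D1 in DV as Hi. split; [lia|split; auto].
    + intros i V W _ DV DW Hne x y Vx Wy. exact (D4 _ _ _ DV DW Hne _ _ Vx Wy).
Qed.

Theorem proposition2p12 (M : mfamily -> Prop) (F : mfamily) (n : nat) :
  (forall Z, M Z -> metric_family Z) ->
  stable_under_inclusion M ->
  metric_family F ->
  (asdim_M_le M F n <->
     (forall r : R, 0 < r -> exists C : cover,
        is_cover F C /\ multiplicity_le F C r (S n) /\
        (forall X U, F X -> C X U -> r_connected X U (2 * r)) /\
        M (cover_family F C)))
  /\
  (asdim_bar_M_le M F n <->
     (forall r : R, 0 < r -> exists C : cover,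
        is_cover F C /\ multiplicity_le F C r (S n) /\
        (forall X U, F X -> C X U -> r_connected X U (2 * r)) /\
        (forall (m : nat) (s : R), 0 < s -> M (N_family F C m s)))).
Proof.
  intros HMZ Hstab HF.
  assert (Hmet : forall X, F X -> is_metric X) by (intros X FX; apply (HF X FX)).
  assert (Hpos : forall r, 0 < r -> 0 < r * 4 ^ S n).
  { intros r Hr. assert (0 < 4 ^ S n) by (apply pow_lt; lra). nra. }
  split; split.
  -
    intros Has Rr HRr.
    destruct (Has (2*Rr+1) ltac:(lra)) as [Z [MZ HZ]].
    assert (Hch : forall X, exists D : nat -> (car X -> Prop) -> Prop, F X ->
              r_decomposition X n (2*Rr+1) D /\
              (forall i V, (i<=n)%nat -> D i V -> Z (sub X V))).
    { intros X. destruct (classic (F X)) as [FX|nFX].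
      - destruct (HZ X FX) as [D HD]. exists D; auto.
      - exists (fun _ _ => False). intro; contradiction. }
    pose (DD := fun X => proj1_sig (constructive_indefinite_description _ (Hch X))).
    assert (HDD : forall X, F X -> r_decomposition X n (2*Rr+1) (DD X) /\
              (forall i V, (i<=n)%nat -> DD X i V -> Z (sub X V))).
    { intros X FX. exact (proj2_sig (constructive_indefinite_description _ (Hch X)) FX). }
    exists (fun X => CCof X n Rr (DD X)).
    split; [|split; [|split]].
    + intros X FX. destruct (HDD X FX) as [Hd _].
      destruct (comp_cover X n Rr (DD X) (Hmet X FX) HRr Hd) as [P1 [P2 _]]. split; auto.
    + intros X FX x Px. destruct (HDD X FX) as [Hd _].
      destruct (comp_cover X n Rr (DD X) (Hmet X FX) HRr Hd) as [_ [_ [P3 _]]]. apply P3; auto.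
    + intros X U FX HU. destruct (HDD X FX) as [Hd _].
      destruct (comp_cover X n Rr (DD X) (Hmet X FX) HRr Hd) as [_ [_ [_ [P4 _]]]]. apply P4; auto.
    + apply (Hstab Z); auto. intros Ysp [X [W [FX [HW ->]]]].
      destruct (HDD X FX) as [Hd HZX].
      destruct (comp_cover X n Rr (DD X) (Hmet X FX) HRr Hd) as [_ [_ [_ [_ P5]]]].
      destruct (P5 W HW) as [i [V [Hi [DV Hsub]]]].
      exists (sub X V), W. split; [apply HZX with i; auto|]. split; [exact Hsub|reflexivity].
  -
    intros H2 r Hr.
    destruct (H2 (r * 4 ^ S n) (Hpos r Hr)) as [C [HC [Hmul [_ MC]]]].
    exists (fun Ysp => exists X U V, F X /\ C X U /\ (forall x, V x -> U x) /\ Ysp = sub X V).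
    split.
    + apply (Hstab (cover_family F C)); auto. intros Ysp [X [U [V [FX [CU [Hsub ->]]]]]].
      exists (sub X U), V. split; [exists X, U; auto|]. split; [exact Hsub|reflexivity].
    + intros X FX.
      destruct (decomp_X X n r (C X) (Hmet X FX) Hr (proj2 (HC X FX)) (Hmul X FX)) as [D [HD H5]].
      exists D. split; auto.
      intros i V _ DV. destruct (H5 i V DV) as [U [CU Hsub]]. exists X, U, V. auto.
  -
    intros Hb Rr HRr.
    destruct (Hb (2*Rr+1) ltac:(lra)) as [D [HD HL]]. cbv zeta in HL. destruct HL as [MC MN].
    exists (fun X => CCof X n Rr (D X)).
    split; [|split; [|split]].
    + intros X FX.
      destruct (comp_cover X n Rr (D X) (Hmet X FX) HRr (HD X FX)) as [P1 [P2 _]]. split; auto.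
    + intros X FX x Px.
      destruct (comp_cover X n Rr (D X) (Hmet X FX) HRr (HD X FX)) as [_ [_ [P3 _]]]. apply P3; auto.
    + intros X U FX HU.
      destruct (comp_cover X n Rr (D X) (Hmet X FX) HRr (HD X FX)) as [_ [_ [_ [P4 _]]]]. apply P4; auto.
    + intros m s Hs. apply (Hstab _ _ (MN m s Hs)).
      intros Ysp [X [W [FX [HW ->]]]].
      destruct (comp_cover X n Rr (D X) (Hmet X FX) HRr (HD X FX)) as [_ [_ [_ [_ P5]]]].
      destruct (P5 W HW) as [i [V [Hi [DV Hsub]]]].
      exists (sub X (Nms X (fun V => exists i, (i<=n)%nat /\ D X i V) s m V)),
             (Nms X (CCof X n Rr (D X)) s m W).
      split; [exists X, V; split; auto; split; [exists i; auto|reflexivity]|].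
      split; [|reflexivity].
      intros y Hy. change (Nms X (fun V => exists i, (i<=n)%nat /\ D X i V) s m V y).
      eapply Nms_mono; [|exact Hsub|exact Hy].
      intros W' HW'. destruct (P5 W' HW') as [i' [V' [Hi' [DV' Hsub']]]].
      exists V'. split; [exists i'; auto|auto].
  -
    intros H4 r Hr.
    destruct (H4 (r * 4 ^ S n) (Hpos r Hr)) as [C [HC [Hmul [_ MN]]]].
    assert (Hch : forall X, exists D : nat -> (car X -> Prop) -> Prop, F X ->
              r_decomposition X n r D /\
              (forall i V, D i V -> exists U, C X U /\ forall x, V x -> U x)).
    { intros X. destruct (classic (F X)) as [FX|nFX].
      - destruct (decomp_X X n r (C X) (Hmet X FX) Hr (proj2 (HC X FX)) (Hmul X FX)) as [D HD].
        exists D; auto.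
      - exists (fun _ _ => False). intro; contradiction. }
    pose (DD := fun X => proj1_sig (constructive_indefinite_description _ (Hch X))).
    assert (HDD : forall X, F X -> r_decomposition X n r (DD X) /\
              (forall i V, DD X i V -> exists U, C X U /\ forall x, V x -> U x)).
    { intros X FX. exact (proj2_sig (constructive_indefinite_description _ (Hch X)) FX). }
    exists DD. split; [intros X FX; apply HDD; auto|]. cbv zeta. split.
    + apply (Hstab _ _ (MN 0%nat 1 ltac:(lra))). intros Ysp [X [V [FX [[i [Hi DV]] ->]]]].
      destruct (HDD X FX) as [_ H5]. destruct (H5 i V DV) as [U [CU Hsub]].
      exists (sub X U), V. split; [exists X, U; auto|]. split; [exact Hsub | reflexivity].
    + intros m s Hs. apply (Hstab _ _ (MN m s Hs)). intros Ysp [X [V [FX [[i [Hi DV]] ->]]]].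
      destruct (HDD X FX) as [_ H5]. destruct (H5 i V DV) as [U [CU Hsub]].
      exists (sub X (Nms X (C X) s m U)), (Nms X (fun V => exists i, (i <= n)%nat /\ DD X i V) s m V).
      split; [exists X, U; auto|]. split; [|reflexivity].
      intros y Hy. change (Nms X (C X) s m U y). eapply Nms_mono; [|exact Hsub|exact Hy].
      intros W [j [Hj DW]]. apply (H5 j W DW).
Qed.
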